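(* If $C$ is an $(n,k)$ linear code over $H(\mathbb{Z})_{2+e_1+e_2+e_3}$ correcting all errors of Lipschitz weight $2$ or less, then $(7^2)^{n-k}\ge 32n^2+1$. If $C$ is an $(n,k)$ linear code over $H(\mathbb{Z})_{3+e_1+e_2}$ correcting all errors of Lipschitz weight $2$ or less, then $(11^2)^{n-k}\ge 32n^2+1$.
   Context: $H(\mathbb{Z})=\{a_0+a_1e_1+a_2e_2+a_3e_3:a_i\in\mathbb{Z}\}$ (Lipschitz integers) with quaternion multiplication $e_1^2=e_2^2=e_3^2=-1$, $e_1e_2=-e_2e_1=e_3$, $e_3e_1=-e_1e_3=e_2$, $e_2e_3=-e_3e_2=e_1$; $N(q)=a_0^2+a_1^2+a_2^2+a_3^2$. Right congruence: $q_1\equiv_r q_2 \pmod\pi$ iff $q_1-q_2=\delta\pi$ for some $\delta\in H(\mathbb{Z})$; $H(\mathbb{Z})_\pi=H(\mathbb{Z})/H(\mathbb{Z})\pi$, which has $N(\pi)^2$ elements (here $N(2+e_1+e_2+e_3)=7$, $N(3+e_1+e_2)=11$). The Lipschitz weight of a class $\gamma$ is $\min\{|a_0|+|a_1|+|a_2|+|a_3| : a_0+a_1e_1+a_2e_2+a_3e_3\in\gamma\}$; the weight of a vector is the sum of the weights of its components. An $(n,k)$ linear code over $H(\mathbb{Z})_\pi$ is an additive subgroup $C\subseteq H(\mathbb{Z})_\pi^n$ such that $H(\mathbb{Z})_\pi^n/C$ has exactly $(N(\pi)^2)^{n-k}$ cosets. $C$ corrects all errors of weight $t$ or less if all vectors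 of Lipschitz weight at most $t$ lie in pairwise distinct cosets of $C$. *)

(* Defs.v *)
From HB Require Import structures.
From mathcomp Require Import all_boot all_order all_algebra.
Set Implicit Arguments. Unset Strict Implicit. Unset Printing Implicit Defensive.
Import Order.TTheory GRing.Theory Num.Theory.
Local Open Scope ring_scope.

(** A Lipschitz integer a0 + a1 e1 + a2 e2 + a3 e3 with a_i in Z. *)
Record lip := Lip { c0 : int; c1 : int; c2 : int; c3 : int }.

Definition lip0 : lip := Lip 0 0 0 0.
Definition lip_add (p q : lip) : lip :=
  Lip (c0 p + c0 q) (c1 p + c1 q) (c2 p + c2 q) (c3 p + c3 q).
Definition lip_opp (p : lip) : lip := Lip (- c0 p) (- c1 p) (- c2 p) (- c3 p).
Definition lip_sub (p q : lip) : lip := lip_add p (lip_opp q).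

(** Hamilton product: e1^2=e2^2=e3^2=-1, e1e2=e3, e2e3=e1, e3e1=e2. *)
Definition lip_mul (a b : lip) : lip :=
  Lip (c0 a * c0 b - c1 a * c1 b - c2 a * c2 b - c3 a * c3 b)
      (c0 a * c1 b + c1 a * c0 b + c2 a * c3 b - c3 a * c2 b)
      (c0 a * c2 b - c1 a * c3 b + c2 a * c0 b + c3 a * c1 b)
      (c0 a * c3 b + c1 a * c2 b - c2 a * c1 b + c3 a * c0 b).

Definition lip_l1 (q : lip) : nat :=
  (absz (c0 q) + absz (c1 q) + absz (c2 q) + absz (c3 q))%N.

Definition rcongr (pi q1 q2 : lip) : Prop :=
  exists delta : lip, lip_sub q1 q2 = lip_mul delta pi.

Definition class_weight (pi q : lip) (w : nat) : Prop :=
  (exists q', rcongr pi q' q /\ lip_l1 q' = w) /\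
  (forall q', rcongr pi q' q -> (w <= lip_l1 q')%N).

(** Vectors of H(Z)_pi^n are represented by vectors of representatives in H(Z)^n;
    two such vectors denote the same element iff they are componentwise congruent. *)
Definition vec (n : nat) := 'I_n -> lip.
Definition vzero n : vec n := fun _ => lip0.
Definition vadd n (x y : vec n) : vec n := fun i => lip_add (x i) (y i).
Definition vopp n (x : vec n) : vec n := fun i => lip_opp (x i).
Definition vsub n (x y : vec n) : vec n := fun i => lip_sub (x i) (y i).
Definition vcongr (pi : lip) n (x y : vec n) : Prop := forall i, rcongr pi (x i) (y i).

Definition vweight_le (pi : lip) n (x : vec n) (t : nat) : Prop :=
  exists w : 'I_n -> nat, (forall i, class_weight pi (x i) (w i)) /\
                          (\sum_(i < n) w i <= t)%N.

(** A subset C of H(Z)_pi^n, given by a predicate on representatives which is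
    invariant under congruence. *)
Definition well_defined (pi : lip) n (C : vec n -> Prop) : Prop :=
  forall x y, vcongr pi x y -> C x -> C y.

Definition additive_subgroup n (C : vec n -> Prop) : Prop :=
  [/\ C (@vzero n), (forall x y, C x -> C y -> C (vadd x y)) &
      (forall x, C x -> C (vopp x))].

Definition num_cosets n (C : vec n -> Prop) (m : nat) : Prop :=
  exists reps : seq (vec n),
    [/\ size reps = m,
        (forall i j, (i < m)%N -> (j < m)%N -> i <> j ->
            ~ C (vsub (nth (@vzero n) reps i) (nth (@vzero n) reps j))) &
        (forall x, exists2 i, (i < m)%N & C (vsub x (nth (@vzero n) reps i)))].

(** (n,k) linear code over H(Z)_pi, where Npi = N(pi). *)
Definition linear_code (pi : lip) (Npi : nat) n k (C : vec n -> Prop) : Prop :=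
  [/\ well_defined pi C, additive_subgroup C & num_cosets C ((Npi ^ 2) ^ (n - k))%N].

Definition corrects (pi : lip) n (C : vec n -> Prop) (t : nat) : Prop :=
  forall x y, vweight_le pi x t -> vweight_le pi y t ->
    ~ vcongr pi x y -> ~ C (vsub x y).

Definition pi7 : lip := Lip 2 1 1 1.
Definition pi11 : lip := Lip 3 1 1 0.

(* Main.v *)
Require Import Defs.
From HB Require Import structures.
From mathcomp Require Import all_boot all_order all_algebra ring zify.
Import GRing.Theory Num.Theory.
Local Open Scope ring_scope.
Definition nrm (x : lip) : int := c0 x ^+ 2 + c1 x ^+ 2 + c2 x ^+ 2 + c3 x ^+ 2.
Lemma nrmM d p : nrm (lip_mul d p) = nrm d * nrm p.
Proof. rewrite /nrm /lip_mul /=. ring. Qed.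
Lemma small x0 x1 x2 x3 : (x0+x1+x2+x3 <= 4)%N -> (7 %| x0^2+x1^2+x2^2+x3^2)%N || (11 %| x0^2+x1^2+x2^2+x3^2)%N -> (x0^2+x1^2+x2^2+x3^2 = 0)%N.
Proof.
case: x0 => [|[|[|[|[|x0]]]]]; case: x1 => [|[|[|[|[|x1]]]]]; case: x2 => [|[|[|[|[|x2]]]]]; case: x3 => [|[|[|[|[|x3]]]]] => //=; lia.
Qed.
Lemma sqabs (x : int) : ((absz x ^ 2)%N)%:Z = x ^+ 2.
Proof. nia. Qed.
Lemma abs_sub (x y : int) : (absz (x - y) <= absz x + absz y)%N.
Proof. lia. Qed.
Lemma nat_mul (s : nat) (N : int) (p : nat) : s%:Z = N * p%:Z -> (p %| s)%N.
Proof. move=> h. have -> : s = (absz N * p)%N by lia. by rewrite dvdn_mull. Qed.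
Lemma sq0 (x : nat) : (x ^ 2 = 0)%N -> x = 0%N.
Proof. by case: x. Qed.
Lemma abs0 (x y : int) : absz (x - y) = 0%N -> x = y.
Proof. lia. Qed.
Lemma sum4 (d0 d1 d2 d3 u0 u1 u2 u3 v0 v1 v2 v3 : nat) :
  (d0 <= u0 + v0)%N -> (d1 <= u1 + v1)%N -> (d2 <= u2 + v2)%N -> (d3 <= u3 + v3)%N ->
  (u0 + u1 + u2 + u3 + (v0 + v1 + v2 + v3) <= 4)%N -> (d0 + d1 + d2 + d3 <= 4)%N.
Proof. lia. Qed.
Lemma key pi a b : (nrm pi = 7 \/ nrm pi = 11) -> rcongr pi a b ->
  (lip_l1 a + lip_l1 b <= 4)%N -> a = b.
Proof.
move=> hpi [delta e] hl.
have hn : nrm (lip_sub a b) = nrm delta * nrm pi by rewrite e nrmM.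
set s := (absz (c0 a - c0 b) ^ 2 + absz (c1 a - c1 b) ^ 2 + absz (c2 a - c2 b) ^ 2 + absz (c3 a - c3 b) ^ 2)%N.
have hs : s%:Z = nrm (lip_sub a b).
  by rewrite /s /nrm /= !PoszD !sqabs.
have hsum : (absz (c0 a - c0 b) + absz (c1 a - c1 b) + absz (c2 a - c2 b) + absz (c3 a - c3 b) <= 4)%N.
  apply: sum4; try exact: abs_sub.
  by move: hl; rewrite /lip_l1.
have hdv : (7 %| s)%N || (11 %| s)%N.
  case: hpi => hpi; rewrite hpi -hs in hn.
    by rewrite (nat_mul _ _ 7 hn).
  by rewrite (nat_mul _ _ 11 hn) orbT.
have := small _ _ _ _ hsum hdv; rewrite -/s /s => s0.
move/eqP: s0; rewrite !addn_eq0 => /andP[/andP[/andP[/eqP/sq0/abs0 h0 /eqP/sq0/abs0 h1] /eqP/sq0/abs0 h2] /eqP/sq0/abs0 h3].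
case: a b {e hl hn hs hsum hdv s} h0 h1 h2 h3 => a0 a1 a2 a3 [b0 b1 b2 b3] /= -> -> -> ->.
by [].
Qed.

Definition Ul : seq lip := [:: Lip 1 0 0 0; Lip 0 1 0 0; Lip 0 0 1 0; Lip 0 0 0 1;
  Lip (-1) 0 0 0; Lip 0 (-1) 0 0; Lip 0 0 (-1) 0; Lip 0 0 0 (-1)].
Definition Wl : seq lip := [:: Lip 2 0 0 0; Lip (-2) 0 0 0; Lip 0 2 0 0; Lip 0 (-2) 0 0; Lip 0 0 2 0; Lip 0 0 (-2) 0; Lip 0 0 0 2; Lip 0 0 0 (-2); Lip 1 1 0 0; Lip 1 (-1) 0 0; Lip (-1) 1 0 0; Lip (-1) (-1) 0 0; Lip 1 0 1 0; Lip 1 0 (-1) 0; Lip (-1) 0 1 0; Lip (-1) 0 (-1) 0; Lip 1 0 0 1; Lip 1 0 0 (-1); Lip (-1) 0 0 1; Lip (-1) 0 0 (-1); Lip 0 1 1 0; Lip 0 1 (-1) 0; Lip 0 (-1) 1 0; Lip 0 (-1) (-1) 0; Lip 0 1 0 1; Lip 0 1 0 (-1); Lip 0 (-1) 0 1; Lip 0 (-1) 0 (-1); Lip 0 0 1 1; Lip 0 0 1 (-1); Lip 0 0 (-1) 1; Lip 0 0 (-1) (-1)].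
Definition U a := nth lip0 Ul a.
Definition W a := nth lip0 Wl a.
Definition code (x : lip) := (c0 x, c1 x, c2 x, c3 x).

Lemma U_le a : (lip_l1 (U a) <= 1)%N.
Proof.
case: (ltnP a (size Ul)) => h; last by rewrite /U nth_default.
have /(all_nthP lip0) H : all (fun x => (lip_l1 x <= 1)%N) Ul by [].
exact: H.
Qed.
Lemma W_le a : (lip_l1 (W a) <= 2)%N.
Proof.
case: (ltnP a (size Wl)) => h; last by rewrite /W nth_default.
have /(all_nthP lip0) H : all (fun x => (lip_l1 x <= 2)%N) Wl by [].
exact: H.
Qed.
Lemma U_pos a : (a < 8)%N -> (0 < lip_l1 (U a))%N.
Proof.
have /(all_nthP lip0) H : all (fun x => (0 < lip_l1 x)%N) Ul by [].
exact: H.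
Qed.
Lemma W_pos a : (a < 32)%N -> (0 < lip_l1 (W a))%N.
Proof.
have /(all_nthP lip0) H : all (fun x => (0 < lip_l1 x)%N) Wl by [].
exact: H.
Qed.
Lemma U_inj a b : (a < 8)%N -> (b < 8)%N -> U a = U b -> a = b.
Proof.
move=> ha hb e.
have hu : uniq (map code Ul) by [].
have ha' : (a < size (map code Ul))%N by rewrite size_map.
have hb' : (b < size (map code Ul))%N by rewrite size_map.
have := nth_uniq (code lip0) ha' hb' hu.
rewrite !(nth_map lip0) // -/(U a) -/(U b) e eqxx.
by move/esym/eqP.
Qed.
Lemma W_inj a b : (a < 32)%N -> (b < 32)%N -> W a = W b -> a = b.
Proof.
move=> ha hb e.
have hu : uniq (map code Wl) by [].
have ha' : (a < size (map code Wl))%N by rewrite size_map.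
have hb' : (b < size (map code Wl))%N by rewrite size_map.
have := nth_uniq (code lip0) ha' hb' hu.
rewrite !(nth_map lip0) // -/(W a) -/(W b) e eqxx.
by move/esym/eqP.
Qed.

Definition gA (i j u : nat) : lip :=
  if i == j then W u else if (i < j)%N then U (u %% 8) else U (u %/ 8 + 4).
Definition gB (i j u : nat) : lip :=
  if i == j then lip0 else if (i < j)%N then U (u %/ 8) else U (u %% 8).
Definition T n := option ('I_n * 'I_n * 'I_32).
Definition gv {n} (t : T n) : vec n := fun k =>
  match t with
  | None => lip0
  | Some (i, j, u) => lip_add (if k == i then gA i j u else lip0)
                              (if k == j then gB i j u else lip0)
  end.

Lemma lip_add0 x : lip_add x lip0 = x.
Proof. by case: x => a b c d; rewrite /lip_add /= !addr0. Qed.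
Lemma lip_0add x : lip_add lip0 x = x.
Proof. by case: x => a b c d; rewrite /lip_add /= !add0r. Qed.
Lemma abs_add (x y : int) : (absz (x + y)%R <= absz x + absz y)%N.
Proof. lia. Qed.
Lemma re4 (d0 d1 d2 d3 u0 u1 u2 u3 v0 v1 v2 v3 : nat) :
  (d0 <= u0 + v0)%N -> (d1 <= u1 + v1)%N -> (d2 <= u2 + v2)%N -> (d3 <= u3 + v3)%N ->
  (d0 + d1 + d2 + d3 <= (u0 + u1 + u2 + u3) + (v0 + v1 + v2 + v3))%N.
Proof. lia. Qed.
Lemma l1_add x y : (lip_l1 (lip_add x y) <= lip_l1 x + lip_l1 y)%N.
Proof. rewrite /lip_l1 /=; apply: re4; exact: abs_add. Qed.

Lemma gA_pos i j u : (u < 32)%N -> (0 < lip_l1 (gA i j u))%N.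
Proof.
move=> hu; rewrite /gA; case: eqP => _; first exact: W_pos.
case: ifP => _; apply: U_pos; lia.
Qed.
Lemma gB_pos i j u : i <> j -> (u < 32)%N -> (0 < lip_l1 (gB i j u))%N.
Proof.
move=> hij hu; rewrite /gB; case: eqP => // _.
case: ifP => _; apply: U_pos; lia.
Qed.
Lemma gAB_l1 i j u : (lip_l1 (gA i j u) + lip_l1 (gB i j u) <= 2)%N.
Proof.
rewrite /gA /gB; case: eqP => _; first by rewrite addn0 W_le.
by case: ifP => _; rewrite -[2%N]/(1 + 1)%N leq_add ?U_le.
Qed.

Lemma gv_at n (i j : 'I_n) (u : 'I_32) k :
  gv (Some (i, j, u)) k = if k == i then gA i j u else if k == j then gB i j u else lip0.
Proof.
rewrite /gv; case: (eqVneq k i) => [->|hki].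
  case: (eqVneq i j) => [<-|hij]; last by rewrite lip_add0.
  by rewrite /gB eqxx lip_add0.
by case: (k == j); rewrite lip_0add.
Qed.

Lemma l1_0 : lip_l1 lip0 = 0%N. Proof. by []. Qed.

Lemma gv_sum n (t : T n) : (\sum_(k < n) lip_l1 (gv t k) <= 2)%N.
Proof.
case: t => [[[i j] u]|]; last by rewrite big1.
apply: leq_trans (gAB_l1 i j u).
apply: (@leq_trans (\sum_(k < n) (lip_l1 (if k == i then gA i j u else lip0) + lip_l1 (if k == j then gB i j u else lip0)))%N).
  by apply: leq_sum => k _; exact: l1_add.
rewrite big_split /=.
apply: leq_add.
  rewrite (bigD1 i) //= eqxx big1 ?addn0 // => k /negbTE ->; exact: l1_0.
rewrite (bigD1 j) //= eqxx big1 ?addn0 // => k /negbTE ->; exact: l1_0.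
Qed.

Lemma gv_le n (t : T n) k : (lip_l1 (gv t k) <= 2)%N.
Proof. have := gv_sum _ t; rewrite (bigD1 k) //=; apply: leq_trans; exact: leq_addr. Qed.

Definition good pi := nrm pi = 7 \/ nrm pi = 11.

Lemma rc_refl pi x : rcongr pi x x.
Proof.
exists lip0; case: x => a b c d; case: pi => p0 p1 p2 p3.
rewrite /lip_sub /lip_add /lip_opp /lip_mul /lip0 /=; congr Lip; ring.
Qed.

Lemma cw pi x : good pi -> (lip_l1 x <= 2)%N -> class_weight pi x (lip_l1 x).
Proof.
move=> hpi hx; split; first by exists x; split => //; exact: rc_refl.
move=> q hq; rewrite leqNgt; apply/negP => hlt.
have h4 : (lip_l1 q + lip_l1 x <= 4)%N by lia.
have eqx := key _ _ _ hpi hq h4.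
by rewrite eqx ltnn in hlt.
Qed.

Lemma vw pi n (t : T n) : good pi -> vweight_le pi (gv t) 2.
Proof.
move=> hpi; exists (fun k => lip_l1 (gv t k)); split; last exact: gv_sum.
by move=> k; apply: cw => //; exact: gv_le.
Qed.

Lemma gv_supp n (i j : 'I_n) (u : 'I_32) k :
  gv (Some (i, j, u)) k <> lip0 -> k = i \/ k = j.
Proof.
rewrite gv_at; case: (eqVneq k i) => [->|_]; first by left.
by case: (eqVneq k j) => [->|_]; [right|].
Qed.

Lemma nz_l1 x : (0 < lip_l1 x)%N -> x <> lip0.
Proof. by move=> h e; rewrite e in h. Qed.

Lemma gv_nzi n (i j : 'I_n) (u : 'I_32) : gv (Some (i, j, u)) i <> lip0.
Proof. rewrite gv_at eqxx; apply: nz_l1; exact: gA_pos. Qed.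

Lemma gv_nzj n (i j : 'I_n) (u : 'I_32) : gv (Some (i, j, u)) j <> lip0.
Proof.
case: (eqVneq i j) => [<-|hij]; first exact: gv_nzi.
rewrite gv_at eqxx eq_sym (negbTE hij); apply: nz_l1; apply: gB_pos => //.
by move=> /val_inj e; rewrite e eqxx in hij.
Qed.

Lemma U_inj' a b : U a = U b -> (a < 8)%N -> (b < 8)%N -> a = b.
Proof. by move=> e ha hb; apply: U_inj. Qed.
Lemma W_inj' a b : W a = W b -> (a < 32)%N -> (b < 32)%N -> a = b.
Proof. by move=> e ha hb; apply: W_inj. Qed.

Lemma ginj n (s t : T n) : (forall k, gv s k = gv t k) -> s = t.
Proof.
case: s => [[[i j] u]|]; case: t => [[[i' j'] u']|] E; last first.
- by [].
- by case: (gv_nzi _ i' j' u'); rewrite -E.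
- by case: (gv_nzi _ i j u); rewrite E.
have mem : forall k, gv (Some (i, j, u)) k <> lip0 -> k = i' \/ k = j'.
  by move=> k h; apply: (gv_supp _ i' j' u'); rewrite -E.
have mem' : forall k, gv (Some (i', j', u')) k <> lip0 -> k = i \/ k = j.
  by move=> k h; apply: (gv_supp _ i j u); rewrite E.
have hi := mem _ (gv_nzi _ i j u); have hj := mem _ (gv_nzj _ i j u).
have hi' := mem' _ (gv_nzi _ i' j' u'); have hj' := mem' _ (gv_nzj _ i' j' u').
have hu := ltn_ord u; have hu' := ltn_ord u'.
case: (eqVneq i j) => hij.
  subst j.
  have ? : i' = i by case: hi'.
  have ? : j' = i by case: hj'.
  subst i' j'.
  move: (E i); rewrite !gv_at eqxx /gA eqxx => /W_inj' e.
  by rewrite (val_inj (e hu hu')).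
have hijn : ((i : nat) == j) = false by apply/negbTE.
have hjin : ((j : nat) == i) = false by rewrite eq_sym.
have hji : (j == i) = false by rewrite eq_sym; apply/negbTE.
have hij2 : (i == j) = false by apply/negbTE.
case: hi => hi.
  subst i'.
  have ? : j' = j by case: hj => // hj; rewrite hj eqxx in hij.
  subst j'.
  have Ei := E i; have Ej := E j.
  rewrite !gv_at eqxx in Ei; rewrite !gv_at hji eqxx in Ej.
  move: Ei Ej; rewrite /gA /gB hijn.
  have hmod : forall a b : nat, (a %% 8 = b %% 8)%N -> (a %/ 8 = b %/ 8)%N -> a = b.
    by move=> a b h1 h2; rewrite (divn_eq a 8) (divn_eq b 8) h1 h2.
  case: ifP => _ /U_inj' h1 /U_inj' h2; congr Some; congr pair; apply: val_inj; apply: hmod.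
  - by apply: h1; lia.
  - by apply: h2; lia.
  - by apply: h2; lia.
  - have : (u %/ 8 + 4 = u' %/ 8 + 4)%N by apply: h1; lia.
    lia.
subst j'.
have ? : i' = j by case: hj => // hj; rewrite hj eqxx in hij.
subst i'.
have Ei := E i; have Ej := E j.
rewrite !gv_at eqxx hij2 in Ei; rewrite !gv_at hji eqxx in Ej.
move: Ei Ej; rewrite /gA /gB hijn hjin.
case: (ltngtP i j) => hlt.
- move=> _ /U_inj' h; exfalso.
  have : (u %/ 8 = u' %/ 8 + 4)%N by apply: h; lia.
  lia.
- move=> /U_inj' h _; exfalso.
  have : (u %/ 8 + 4 = u' %/ 8)%N by apply: h; lia.
  lia.
- by move/val_inj: hlt => e; rewrite e eqxx in hij.
Qed.

From Stdlib Require IndefiniteDescription.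

Lemma bound pi (Npi : nat) n k (C : vec n -> Prop) : good pi ->
  @linear_code pi Npi n k C -> corrects pi C 2 ->
  (32 * n ^ 2 + 1 <= (Npi ^ 2) ^ (n - k))%N.
Proof.
move=> hpi [wd [C0 Cadd Copp] [reps [hsz _ hcov]]] hcor.
set m := ((Npi ^ 2) ^ (n - k))%N.
have hch : forall t : T n, {i : nat | (i < m)%N /\ C (vsub (gv t) (nth (@vzero n) reps i))}.
  move=> t; apply: IndefiniteDescription.constructive_indefinite_description.
  by case: (hcov (gv t)) => i hi hc; exists i.
pose h (t : T n) : 'I_m := Ordinal (proj1 (proj2_sig (hch t))).
have hinj : injective h.
  move=> s t /(congr1 val) /= e.
  case: (eqVneq s t) => // hne; exfalso.
  have hs := proj2 (proj2_sig (hch s)); have ht := proj2 (proj2_sig (hch t)).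
  rewrite e in hs.
  have hC : C (vsub (gv s) (gv t)).
    apply: (wd _ _ _ (Cadd _ _ hs (Copp _ ht))).
    move=> i; exists lip0.
    rewrite /vadd /vopp /vsub /lip_sub /lip_add /lip_opp /lip_mul /lip0 /=.
    congr Lip; ring.
  apply: (hcor _ _ (vw _ _ s hpi) (vw _ _ t hpi) _ hC) => hv.
  move/eqP: hne; apply; apply: ginj => i.
  apply: (key _ _ _ hpi (hv i)).
  have := gv_le _ s i; have := gv_le _ t i; lia.
have := leq_card h hinj.
rewrite card_ord card_option !card_prod !card_ord.
rewrite -/m; nia.
Qed.

Theorem theorem9 :
  (forall (n k : nat) (C : vec n -> Prop),
      (k <= n)%N -> linear_code pi7 7 k C -> corrects pi7 C 2 ->
      (32 * n ^ 2 + 1 <= (7 ^ 2) ^ (n - k))%N) /\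
  (forall (n k : nat) (C : vec n -> Prop),
      (k <= n)%N -> linear_code pi11 11 k C -> corrects pi11 C 2 ->
      (32 * n ^ 2 + 1 <= (11 ^ 2) ^ (n - k))%N).
Proof.
split => n k C _ hl hc.
  by apply: (bound _ _ _ _ _ _ hl hc); left.
by apply: (bound _ _ _ _ _ _ hl hc); right.
Qed.
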